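(* Let $n\ge1$ and let $(\phi_1^k,\phi_2^k)\in\vec{\mathcal C}^{\mathcal G}_{\rm per}$, $k=n-1,n,n+1$, with $\overline{\phi_i^{n-1}}=\overline{\phi_i^{n}}=\overline{\phi_i^{n+1}}$ ($i=1,2$), where $(\phi_1^{n+1},\phi_2^{n+1})$ solves the BDF2 scheme at step $n+1$ with constants satisfying $A_1\ge\frac{\mathcal M_1(3\chi_{13}+3\chi_{23}+2\chi_{12})^2}{4}$ and $A_2\ge\frac{\mathcal M_2(3\chi_{13}+3\chi_{23}+2\chi_{12})^2}{4}$. Define, for $m\ge0$, $E_h^{m+1,m}=G_h(\phi_1^{m+1},\phi_2^{m+1})+\frac{\Delta t}{4\mathcal M_1}\big\|\frac{\phi_1^{m+1}-\phi_1^m}{\Delta t}\big\|_{-1,h}^2+\frac{\Delta t}{4\mathcal M_2}\big\|\frac{\phi_2^{m+1}-\phi_2^m}{\Delta t}\big\|_{-1,h}^2+\frac{2\chi_{12}+3\chi_{13}+\chi_{23}}{2}\|\phi_1^{m+1}-\phi_1^m\|_2^2+\frac{2\chi_{12}+\chi_{13}+3\chi_{23}}{2}\|\phi_2^{m+1}-\phi_2^m\|_2^2.$ Then $E_h^{n+1,n}\le E_h^{n,n-1}$.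
   Context: Discrete setting. Fix $L>0$, $N\in\mathbb N$, $h=L/N$, $\Omega=(0,L)^2$. $\mathcal C_{\rm per}$ is the space of real grid functions $\nu=(\nu_{i,j})_{i,j\in\mathbb Z}$ with $\nu_{i+aN,j+bN}=\nu_{i,j}$ for all integers $i,j,a,b$ ($\nu_{i,j}$ is the value at the cell centre $((i-\tfrac12)h,(j-\tfrac12)h)$); periodic face-centred functions are indexed by $(i+\frac12,j)$ (east-west faces) or $(i,j+\frac12)$ (north-south faces). Define $(A_x\nu)_{i+\frac12,j}=\tfrac12(\nu_{i+1,j}+\nu_{i,j})$, $(D_x\nu)_{i+\frac12,j}=\tfrac1h(\nu_{i+1,j}-\nu_{i,j})$, and for east-west face functions $f$, $(a_xf)_{i,j}=\tfrac12(f_{i+\frac12,j}+f_{i-\frac12,j})$, $(d_xf)_{i,j}=\tfrac1h(f_{i+\frac12,j}-f_{i-\frac12,j})$; $A_y,D_y,a_y,d_y$ are defined analogously in the second index. $\nabla_h\nu=(D_x\nu,D_y\nu)$, $\nabla_h\cdot(f^x,f^y)=d_xf^x+d_yf^y$, $\Delta_h\nu=d_x(D_x\nu)+d_y(D_y\nu)$ (the 5-point Laplacian). For $\nu,\xi\in\mathcal C_{\rm per}$: $\langle\nu,\xi\rangle=h^2\sum_{i,j=1}^N\nu_{i,j}\xi_{i,j}$, $\|\nu\|_2=\langle\nu,\nu\rangle^{1/2}$, $\|\nu\|_\infty=\max_{1\le i,j\le N}|\nu_{i,j}|$, $\|\nabla_h\nu\|_2^2=\langle a_x((D_x\nu)^2)+a_y((D_y\nu)^2),1\rangle$,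 $\overline{\nu}=|\Omega|^{-1}\langle\nu,1\rangle$. For $\overline\nu=0$, $(-\Delta_h)^{-1}\nu$ denotes the unique mean-zero $\psi\in\mathcal C_{\rm per}$ with $-\Delta_h\psi=\nu$; for mean-zero $\nu,\xi$, $\langle\nu,\xi\rangle_{-1,h}=\langle\nu,(-\Delta_h)^{-1}\xi\rangle$ and $\|\nu\|_{-1,h}=\langle\nu,\nu\rangle_{-1,h}^{1/2}$. Functions of grid functions (products, quotients, $\ln$) act pointwise. Model. $M_0,N_0>0$, $\alpha=\pi((M_0/\pi)^{1/2}+N_0/2)^2$, $\beta=2(M_0/\pi)^{1/2}+N_0$; $\varepsilon_1,\varepsilon_2,\varepsilon_3>0$; $\chi_{12},\chi_{13},\chi_{23}>0$ with $4\chi_{13}\chi_{23}-(\chi_{12}-\chi_{13}-\chi_{23})^2>0$; mobilities $\mathcal M_1,\mathcal M_2>0$. For $a,b>0$, $a+b<1$: $S(a,b)=\frac{a}{M_0}\ln\frac{\alpha a}{M_0}+\frac{b}{N_0}\ln\frac{\beta b}{N_0}+(1-a-b)\ln(1-a-b)$, $H(a,b)=\chi_{12}ab+\chi_{13}a(1-a-b)+\chi_{23}b(1-a-b)$; thus $\partial_aS=\frac1{M_0}\ln\frac{\alpha a}{M_0}+\frac1{M_0}-\ln(1-a-b)-1$, $\partial_bS=\frac1{N_0}\ln\frac{\beta b}{N_0}+\frac1{N_0}-\ln(1-a-b)-1$, $\partial_aH=\chi_{13}-2\chi_{13}a+(\chi_{12}-\chi_{13}-\chi_{23})b$, $\partial_bH=\chi_{23}-2\chi_{23}b+(\chi_{12}-\chi_{13}-\chi_{23})a$.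 $\kappa(s)=1/(36s)$. The Gibbs triangle is $\mathcal G=\{(a,b):a>0,b>0,a+b<1\}$, and $\vec{\mathcal C}^{\mathcal G}_{\rm per}$ is the set of pairs $(\phi_1,\phi_2)\in\mathcal C_{\rm per}^2$ with $((\phi_1)_{i,j},(\phi_2)_{i,j})\in\mathcal G$ for all $i,j$. For such a pair set $u_1=\phi_1$, $u_2=\phi_2$, $u_3=1-\phi_1-\phi_2$ and, for $k=1,2,3$, $T_k(\phi_1,\phi_2)=a_x(\kappa'(A_xu_k)(D_xu_k)^2)-2d_x(\kappa(A_xu_k)D_xu_k)+a_y(\kappa'(A_yu_k)(D_yu_k)^2)-2d_y(\kappa(A_yu_k)D_yu_k)$. Discrete energy: $G_h(\phi_1,\phi_2)=\langle S(\phi_1,\phi_2)+H(\phi_1,\phi_2),1\rangle+\sum_{k=1}^3\varepsilon_k^2\langle a_x(\kappa(A_xu_k)(D_xu_k)^2)+a_y(\kappa(A_yu_k)(D_yu_k)^2),1\rangle$. Convex-part derivatives: $\delta_{\phi_1}G_{h,c}(\phi_1,\phi_2)=\partial_aS(\phi_1,\phi_2)+\varepsilon_1^2T_1-\varepsilon_3^2T_3$, $\delta_{\phi_2}G_{h,c}(\phi_1,\phi_2)=\partial_bS(\phi_1,\phi_2)+\varepsilon_2^2T_2-\varepsilon_3^2T_3$. BDF2 scheme. Fix $\Delta t>0$ and constants $A_1,A_2\ge0$. For $n\ge1$, given $(\phi_1^{k},\phi_2^{k})$, $k=n-1,n$, set $\hat\phi_i^n=2\phi_i^n-\phi_i^{n-1}$.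 A pair $(\phi_1^{n+1},\phi_2^{n+1})\in\vec{\mathcal C}^{\mathcal G}_{\rm per}$ solves the scheme at step $n+1$ if for $i=1,2$: $\frac{3\phi_i^{n+1}-4\phi_i^n+\phi_i^{n-1}}{2\Delta t}=\mathcal M_i\Delta_h\mu_i^{n+1}$, where $\mu_1^{n+1}=\delta_{\phi_1}G_{h,c}(\phi_1^{n+1},\phi_2^{n+1})+\partial_aH(\hat\phi_1^n,\hat\phi_2^n)-A_1\Delta t\,\Delta_h(\phi_1^{n+1}-\phi_1^n)$ and $\mu_2^{n+1}=\delta_{\phi_2}G_{h,c}(\phi_1^{n+1},\phi_2^{n+1})+\partial_bH(\hat\phi_1^n,\hat\phi_2^n)-A_2\Delta t\,\Delta_h(\phi_2^{n+1}-\phi_2^n)$. *)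

(* Defs.v *)
From Stdlib Require Import ClassicalEpsilon.
From mathcomp Require Import all_boot all_order all_algebra.
From mathcomp Require Import reals exp trigo.
Set Implicit Arguments. Unset Strict Implicit. Unset Printing Implicit Defensive.
Import Order.TTheory GRing.Theory Num.Theory.
Local Open Scope ring_scope.

Section Grid.
Variable R : realType.

(* cell-centred grid functions: v i j = value at ((i-1/2)h,(j-1/2)h) *)
Definition grid := int -> int -> R.
(* Face-centred functions are also stored as int -> int -> R:
   east-west faces: f i j = f_{i+1/2,j};  north-south faces: g i j = g_{i,j+1/2}. *)

Definition periodic (N : nat) (v : grid) : Prop :=
  forall i j a b : int, v (i + a * N%:Z) (j + b * N%:Z) = v i j.

Definition Ax (v : grid) : grid := fun i j => (v (i + 1) j + v i j) / 2.
Definition Dx (h : R) (v : grid) : grid := fun i j => (v (i + 1) j - v i j) / h.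
Definition ax (f : grid) : grid := fun i j => (f i j + f (i - 1) j) / 2.
Definition dx (h : R) (f : grid) : grid := fun i j => (f i j - f (i - 1) j) / h.
Definition Ay (v : grid) : grid := fun i j => (v i (j + 1) + v i j) / 2.
Definition Dy (h : R) (v : grid) : grid := fun i j => (v i (j + 1) - v i j) / h.
Definition ay (f : grid) : grid := fun i j => (f i j + f i (j - 1)) / 2.
Definition dy (h : R) (f : grid) : grid := fun i j => (f i j - f i (j - 1)) / h.

Definition lap (h : R) (v : grid) : grid :=
  fun i j => dx h (Dx h v) i j + dy h (Dy h v) i j.

Definition inner (N : nat) (h : R) (v w : grid) : R :=
  h ^+ 2 * \sum_(i < N) \sum_(j < N)
     v (i.+1)%:Z (j.+1)%:Z * w (i.+1)%:Z (j.+1)%:Z.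
Definition one : grid := fun _ _ => 1.
Definition norm2 (N : nat) (h : R) (v : grid) : R := Num.sqrt (inner N h v v).
Definition mean (N : nat) (h L : R) (v : grid) : R := inner N h v one / (L ^+ 2).

(* (-Delta_h)^{-1} v : the (unique, for mean-zero v) mean-zero periodic psi
   with -Delta_h psi = v *)
Definition invlap (N : nat) (h L : R) (v : grid) : grid :=
  epsilon (inhabits (fun _ _ => 0 : R))
    (fun psi : grid => periodic N psi /\ mean N h L psi = 0 /\
                       forall i j, - lap h psi i j = v i j).
Definition neg1_inner (N : nat) (h L : R) (v w : grid) : R :=
  inner N h v (invlap N h L w).
Definition neg1_norm (N : nat) (h L : R) (v : grid) : R :=
  Num.sqrt (neg1_inner N h L v v).

Record model := Model {
  M0 : R; N0 : R; eps1 : R; eps2 : R; eps3 : R;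
  chi12 : R; chi13 : R; chi23 : R }.

Definition alpha (p : model) : R := pi * (Num.sqrt (M0 p / pi) + N0 p / 2) ^+ 2.
Definition beta (p : model) : R := 2 * Num.sqrt (M0 p / pi) + N0 p.

Definition Sfun (p : model) (a b : R) : R :=
  a / M0 p * ln (alpha p * a / M0 p) + b / N0 p * ln (beta p * b / N0 p)
  + (1 - a - b) * ln (1 - a - b).
Definition Hfun (p : model) (a b : R) : R :=
  chi12 p * a * b + chi13 p * a * (1 - a - b) + chi23 p * b * (1 - a - b).
Definition dSa (p : model) (a b : R) : R :=
  (M0 p)^-1 * ln (alpha p * a / M0 p) + (M0 p)^-1 - ln (1 - a - b) - 1.
Definition dSb (p : model) (a b : R) : R :=
  (N0 p)^-1 * ln (beta p * b / N0 p) + (N0 p)^-1 - ln (1 - a - b) - 1.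
Definition dHa (p : model) (a b : R) : R :=
  chi13 p - 2 * chi13 p * a + (chi12 p - chi13 p - chi23 p) * b.
Definition dHb (p : model) (a b : R) : R :=
  chi23 p - 2 * chi23 p * b + (chi12 p - chi13 p - chi23 p) * a.

Definition kappa (s : R) : R := 1 / (36 * s).
Definition kappa' (s : R) : R := - 1 / (36 * s ^+ 2).

Definition pair := (grid * grid)%type.

Definition in_gibbs (N : nat) (ph : pair) : Prop :=
  periodic N ph.1 /\ periodic N ph.2 /\
  forall i j, 0 < ph.1 i j /\ 0 < ph.2 i j /\ ph.1 i j + ph.2 i j < 1.

Definition u1 (ph : pair) : grid := ph.1.
Definition u2 (ph : pair) : grid := ph.2.
Definition u3 (ph : pair) : grid := fun i j => 1 - ph.1 i j - ph.2 i j.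

Definition Tk (h : R) (u : grid) : grid := fun i j =>
  ax (fun i j => kappa' (Ax u i j) * (Dx h u i j) ^+ 2) i j
  - 2 * dx h (fun i j => kappa (Ax u i j) * Dx h u i j) i j
  + ay (fun i j => kappa' (Ay u i j) * (Dy h u i j) ^+ 2) i j
  - 2 * dy h (fun i j => kappa (Ay u i j) * Dy h u i j) i j.

Definition grad_term (h : R) (u : grid) : grid := fun i j =>
  ax (fun i j => kappa (Ax u i j) * (Dx h u i j) ^+ 2) i j
  + ay (fun i j => kappa (Ay u i j) * (Dy h u i j) ^+ 2) i j.

Definition Gh (N : nat) (h : R) (p : model) (ph : pair) : R :=
  inner N h (fun i j => Sfun p (ph.1 i j) (ph.2 i j) + Hfun p (ph.1 i j) (ph.2 i j)) one
  + eps1 p ^+ 2 * inner N h (grad_term h (u1 ph)) one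
  + eps2 p ^+ 2 * inner N h (grad_term h (u2 ph)) one
  + eps3 p ^+ 2 * inner N h (grad_term h (u3 ph)) one.

Definition dG1 (h : R) (p : model) (ph : pair) : grid := fun i j =>
  dSa p (ph.1 i j) (ph.2 i j) + eps1 p ^+ 2 * Tk h (u1 ph) i j
  - eps3 p ^+ 2 * Tk h (u3 ph) i j.
Definition dG2 (h : R) (p : model) (ph : pair) : grid := fun i j =>
  dSb p (ph.1 i j) (ph.2 i j) + eps2 p ^+ 2 * Tk h (u2 ph) i j
  - eps3 p ^+ 2 * Tk h (u3 ph) i j.

(* BDF2 scheme at step n+1: pm = step n-1, pn = step n, pp = step n+1 *)
Definition bdf2_step (h : R) (p : model) (Mob1 Mob2 dt A1 A2 : R)
    (pm pn pp : pair) : Prop :=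
  let hat1 : grid := fun i j => 2 * pn.1 i j - pm.1 i j in
  let hat2 : grid := fun i j => 2 * pn.2 i j - pm.2 i j in
  let mu1 : grid := fun i j => dG1 h p pp i j + dHa p (hat1 i j) (hat2 i j)
      - A1 * dt * lap h (fun i j => pp.1 i j - pn.1 i j) i j in
  let mu2 : grid := fun i j => dG2 h p pp i j + dHb p (hat1 i j) (hat2 i j)
      - A2 * dt * lap h (fun i j => pp.2 i j - pn.2 i j) i j in
  forall i j,
    (3 * pp.1 i j - 4 * pn.1 i j + pm.1 i j) / (2 * dt) = Mob1 * lap h mu1 i j /\
    (3 * pp.2 i j - 4 * pn.2 i j + pm.2 i j) / (2 * dt) = Mob2 * lap h mu2 i j.

(* modified energy E_h^{m+1,m} with pnew = step m+1, pold = step m *)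
Definition Eh (N : nat) (h L : R) (p : model) (Mob1 Mob2 dt : R)
    (pnew pold : pair) : R :=
  Gh N h p pnew
  + dt / (4 * Mob1) *
      neg1_norm N h L (fun i j => (pnew.1 i j - pold.1 i j) / dt) ^+ 2
  + dt / (4 * Mob2) *
      neg1_norm N h L (fun i j => (pnew.2 i j - pold.2 i j) / dt) ^+ 2
  + (2 * chi12 p + 3 * chi13 p + chi23 p) / 2 *
      norm2 N h (fun i j => pnew.1 i j - pold.1 i j) ^+ 2
  + (2 * chi12 p + chi13 p + 3 * chi23 p) / 2 *
      norm2 N h (fun i j => pnew.2 i j - pold.2 i j) ^+ 2.

End Grid.

(* Main.v *)
From HB Require Import structures.
Require Import Defs.
From Stdlib Require Import ClassicalEpsilon.
From mathcomp Require Import all_boot all_order all_algebra.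
From mathcomp Require Import reals exp trigo.
From mathcomp Require Import lra ring zify.
Set Implicit Arguments. Unset Strict Implicit. Unset Printing Implicit Defensive.
Import Order.TTheory GRing.Theory Num.Theory.
Local Open Scope ring_scope.

Section W1.
Variable R : realType.
Variable N : nat.

Definition per (g : grid R) :=
  (forall i j, g (i + N%:Z) j = g i j) /\ (forall i j, g i (j + N%:Z) = g i j).

Definition SS (f : grid R) : R := \sum_(i < N) \sum_(j < N) f (i.+1)%:Z (j.+1)%:Z.

Lemma periodic_per (v : grid R) : Defs.periodic N v -> per v.
Proof.
move=> Hv; split=> i j.
- by have := Hv i j 1 0; rewrite mul1r mul0r addr0.
- by have := Hv i j 0 1; rewrite mul1r mul0r addr0.
Qed.

Lemma msq_ge0 (x : R) : 0 <= x * x.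
Proof. by rewrite -expr2 sqr_ge0. Qed.

Lemma msq_eq0 (x : R) : (x * x == 0) = (x == 0).
Proof. by rewrite mulf_eq0 orbb. Qed.

Lemma SSD f g : SS (fun i j => f i j + g i j) = SS f + SS g.
Proof. by rewrite /SS -big_split /=; apply: eq_bigr => i _; rewrite -big_split. Qed.

Lemma SSN f : SS (fun i j => - f i j) = - SS f.
Proof. by rewrite /SS -sumrN; apply: eq_bigr => i _; rewrite -sumrN. Qed.

Lemma SSB f g : SS (fun i j => f i j - g i j) = SS f - SS g.
Proof. by rewrite -SSN -SSD. Qed.

Lemma SSZ c f : SS (fun i j => c * f i j) = c * SS f.
Proof. by rewrite /SS mulr_sumr; apply: eq_bigr => i _; rewrite mulr_sumr. Qed.

Lemma SSZr c f : SS (fun i j => f i j * c) = SS f * c.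
Proof. by rewrite /SS mulr_suml; apply: eq_bigr => i _; rewrite mulr_suml. Qed.

Lemma SS_ext f g : (forall i j, f i j = g i j) -> SS f = SS g.
Proof. by move=> H; rewrite /SS; apply: eq_bigr => i _; apply: eq_bigr => j _. Qed.

Lemma SS_le f g : (forall i j, f i j <= g i j) -> SS f <= SS g.
Proof. by move=> H; rewrite /SS; apply: ler_sum => i _; apply: ler_sum => j _. Qed.

Lemma SS_ge0 f : (forall i j, 0 <= f i j) -> 0 <= SS f.
Proof. by move=> H; rewrite /SS; apply: sumr_ge0 => i _; apply: sumr_ge0 => j _. Qed.

Lemma SS0 : SS (fun _ _ => 0) = 0.
Proof. by rewrite /SS big1 // => i _; rewrite big1. Qed.

Lemma SSone : SS (fun _ _ => 1) = (N * N)%:R.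
Proof.
rewrite /SS.
have E : forall i : 'I_N, \sum_(j < N) (1:R) = N%:R by move=> i; rewrite sumr_const card_ord.
rewrite (eq_bigr _ (fun i _ => E i)).
by rewrite sumr_const card_ord natrM mulr_natr.
Qed.

Lemma PoszS1 (n : nat) : (n.+1)%:Z - 1 = n%:Z.
Proof. by rewrite -addn1 PoszD addrK. Qed.

Lemma sum_shift (m : nat) (g : int -> R) : g 0 = g m ->
  \sum_(i < m) g (i.+1)%:Z = \sum_(i < m) g i%:Z.
Proof.
case: m => [|n] H; first by rewrite !big_ord0.
rewrite big_ord_recr big_ord_recl /= H addrC; congr (_ + _).
Qed.

Lemma SS_shiftx g : per g -> SS (fun i j => g (i - 1) j) = SS g.
Proof.
case=> Hx _; rewrite /SS exchange_big [RHS]exchange_big /=.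
apply: eq_bigr => j _.
rewrite (eq_bigr (fun i : 'I_N => g i%:Z (j.+1)%:Z)); last by move=> i _; rewrite PoszS1.
by rewrite (sum_shift (g := fun k => g k (j.+1)%:Z)) // -(Hx 0) add0r.
Qed.

Lemma SS_shifty g : per g -> SS (fun i j => g i (j - 1)) = SS g.
Proof.
case=> _ Hy; rewrite /SS.
apply: eq_bigr => i _.
rewrite (eq_bigr (fun j : 'I_N => g (i.+1)%:Z j%:Z)); last by move=> j _; rewrite PoszS1.
by rewrite (sum_shift (g := fun k => g (i.+1)%:Z k)) // -(Hy _ 0) add0r.
Qed.

End W1.

Section W2.
Variable R : realType.
Variable N : nat.
Variable h : R.
Local Notation per := (@per R N).
Local Notation SS := (@SS R N).

Lemma per_pw1 (F : R -> R) u : per u -> per (fun i j => F (u i j)).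
Proof. by case=> H1 H2; split=> i j; rewrite ?H1 ?H2. Qed.

Lemma per_pw2 (F : R -> R -> R) u v : per u -> per v -> per (fun i j => F (u i j) (v i j)).
Proof. by case=> H1 H2 [H3 H4]; split=> i j; rewrite ?H1 ?H2 ?H3 ?H4. Qed.

Lemma per_add u v : per u -> per v -> per (fun i j => u i j + v i j).
Proof. exact: (per_pw2 (fun a b => a + b)). Qed.
Lemma per_sub u v : per u -> per v -> per (fun i j => u i j - v i j).
Proof. exact: (per_pw2 (fun a b => a - b)). Qed.
Lemma per_mul u v : per u -> per v -> per (fun i j => u i j * v i j).
Proof. exact: (per_pw2 (fun a b => a * b)). Qed.
Lemma per_const c : per (fun _ _ => c).
Proof. by split. Qed.
Lemma per_scal c u : per u -> per (fun i j => c * u i j).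
Proof. exact: (per_pw1 (fun a => c * a)). Qed.

Lemma per_sx u : per u -> per (fun i j => u (i + 1) j).
Proof. by case=> H1 H2; split=> i j; rewrite ?H2 // addrAC H1. Qed.
Lemma per_sxm u : per u -> per (fun i j => u (i - 1) j).
Proof. by case=> H1 H2; split=> i j; rewrite ?H2 // addrAC H1. Qed.
Lemma per_sy u : per u -> per (fun i j => u i (j + 1)).
Proof. by case=> H1 H2; split=> i j; rewrite ?H1 // addrAC H2. Qed.
Lemma per_sym u : per u -> per (fun i j => u i (j - 1)).
Proof. by case=> H1 H2; split=> i j; rewrite ?H1 // addrAC H2. Qed.

Lemma per_Ax u : per u -> per (Ax u).
Proof. by move=> P; apply: (per_pw2 (fun a b => (a + b) / 2)) => //; apply: per_sx. Qed.
Lemma per_Ay u : per u -> per (Ay u).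
Proof. by move=> P; apply: (per_pw2 (fun a b => (a + b) / 2)) => //; apply: per_sy. Qed.
Lemma per_Dx u : per u -> per (Dx h u).
Proof. by move=> P; apply: (per_pw2 (fun a b => (a - b) / h)) => //; apply: per_sx. Qed.
Lemma per_Dy u : per u -> per (Dy h u).
Proof. by move=> P; apply: (per_pw2 (fun a b => (a - b) / h)) => //; apply: per_sy. Qed.
Lemma per_ax u : per u -> per (ax u).
Proof. by move=> P; apply: (per_pw2 (fun a b => (a + b) / 2)) => //; apply: per_sxm. Qed.
Lemma per_ay u : per u -> per (ay u).
Proof. by move=> P; apply: (per_pw2 (fun a b => (a + b) / 2)) => //; apply: per_sym. Qed.
Lemma per_dx u : per u -> per (dx h u).
Proof. by move=> P; apply: (per_pw2 (fun a b => (a - b) / h)) => //; apply: per_sxm. Qed.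
Lemma per_dy u : per u -> per (dy h u).
Proof. by move=> P; apply: (per_pw2 (fun a b => (a - b) / h)) => //; apply: per_sym. Qed.

Lemma per_lap u : per u -> per (lap h u).
Proof. by move=> P; apply: per_add; [apply/per_dx/per_Dx|apply/per_dy/per_Dy]. Qed.

Lemma per_Tk u : per u -> per (Tk h u).
Proof.
move=> P; rewrite /Tk.
apply: per_sub; [apply: per_add; [apply: per_sub|]|].
- apply: per_ax; apply: per_mul; [exact: (per_pw1 (@kappa' R) (per_Ax P))|exact: (per_pw1 (fun a => a ^+ 2) (per_Dx P))].
- apply: per_scal; apply: per_dx; apply: per_mul; [exact: (per_pw1 (@kappa R) (per_Ax P))|exact: per_Dx].
- apply: per_ay; apply: per_mul; [exact: (per_pw1 (@kappa' R) (per_Ay P))|exact: (per_pw1 (fun a => a ^+ 2) (per_Dy P))].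
- apply: per_scal; apply: per_dy; apply: per_mul; [exact: (per_pw1 (@kappa R) (per_Ay P))|exact: per_Dy].
Qed.

Lemma shiftx_prod F w : per F -> per w ->
  SS (fun i j => F (i - 1) j * w i j) = SS (fun i j => F i j * w (i + 1) j).
Proof.
move=> PF Pw.
rewrite -(SS_shiftx (g := fun i j => F i j * w (i + 1) j)); last by apply: per_mul => //; apply: per_sx.
by apply: SS_ext => i j; rewrite subrK.
Qed.

Lemma shifty_prod F w : per F -> per w ->
  SS (fun i j => F i (j - 1) * w i j) = SS (fun i j => F i j * w i (j + 1)).
Proof.
move=> PF Pw.
rewrite -(SS_shifty (g := fun i j => F i j * w i (j + 1))); last by apply: per_mul => //; apply: per_sy.
by apply: SS_ext => i j; rewrite subrK.
Qed.

Lemma sbp_dx F w : per F -> per w ->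
  SS (fun i j => dx h F i j * w i j) = - SS (fun i j => F i j * Dx h w i j).
Proof.
move=> PF Pw.
have E1 : SS (fun i j => dx h F i j * w i j) =
   (SS (fun i j => F i j * w i j) - SS (fun i j => F (i - 1) j * w i j)) / h.
  by rewrite -SSB -SSZr; apply: SS_ext => i j; rewrite /dx; ring.
have E2 : SS (fun i j => F i j * Dx h w i j) =
   (SS (fun i j => F i j * w (i + 1) j) - SS (fun i j => F i j * w i j)) / h.
  by rewrite -SSB -SSZr; apply: SS_ext => i j; rewrite /Dx; ring.
rewrite E1 E2 shiftx_prod //; ring.
Qed.

Lemma sbp_dy F w : per F -> per w ->
  SS (fun i j => dy h F i j * w i j) = - SS (fun i j => F i j * Dy h w i j).
Proof.
move=> PF Pw.
have E1 : SS (fun i j => dy h F i j * w i j) =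
   (SS (fun i j => F i j * w i j) - SS (fun i j => F i (j - 1) * w i j)) / h.
  by rewrite -SSB -SSZr; apply: SS_ext => i j; rewrite /dy; ring.
have E2 : SS (fun i j => F i j * Dy h w i j) =
   (SS (fun i j => F i j * w i (j + 1)) - SS (fun i j => F i j * w i j)) / h.
  by rewrite -SSB -SSZr; apply: SS_ext => i j; rewrite /Dy; ring.
rewrite E1 E2 shifty_prod //; ring.
Qed.

Lemma sbp_ax F w : per F -> per w ->
  SS (fun i j => ax F i j * w i j) = SS (fun i j => F i j * Ax w i j).
Proof.
move=> PF Pw.
have E1 : SS (fun i j => ax F i j * w i j) =
   (SS (fun i j => F i j * w i j) + SS (fun i j => F (i - 1) j * w i j)) / 2.
  by rewrite -SSD -SSZr; apply: SS_ext => i j; rewrite /ax; ring.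
have E2 : SS (fun i j => F i j * Ax w i j) =
   (SS (fun i j => F i j * w (i + 1) j) + SS (fun i j => F i j * w i j)) / 2.
  by rewrite -SSD -SSZr; apply: SS_ext => i j; rewrite /Ax; ring.
rewrite E1 E2 shiftx_prod //; ring.
Qed.

Lemma sbp_ay F w : per F -> per w ->
  SS (fun i j => ay F i j * w i j) = SS (fun i j => F i j * Ay w i j).
Proof.
move=> PF Pw.
have E1 : SS (fun i j => ay F i j * w i j) =
   (SS (fun i j => F i j * w i j) + SS (fun i j => F i (j - 1) * w i j)) / 2.
  by rewrite -SSD -SSZr; apply: SS_ext => i j; rewrite /ay; ring.
have E2 : SS (fun i j => F i j * Ay w i j) =
   (SS (fun i j => F i j * w i (j + 1)) + SS (fun i j => F i j * w i j)) / 2.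
  by rewrite -SSD -SSZr; apply: SS_ext => i j; rewrite /Ay; ring.
rewrite E1 E2 shifty_prod //; ring.
Qed.

Definition Gr (a b : grid R) : R :=
  SS (fun i j => Dx h a i j * Dx h b i j + Dy h a i j * Dy h b i j).

Lemma sbp_lap a b : per a -> per b -> SS (fun i j => lap h a i j * b i j) = - Gr a b.
Proof.
move=> Pa Pb.
have -> : SS (fun i j => lap h a i j * b i j) =
  SS (fun i j => dx h (Dx h a) i j * b i j) + SS (fun i j => dy h (Dy h a) i j * b i j).
  by rewrite -SSD; apply: SS_ext => i j; rewrite /lap mulrDl.
rewrite (sbp_dx (per_Dx Pa) Pb) (sbp_dy (per_Dy Pa) Pb).
by rewrite /Gr SSD opprD.
Qed.

Lemma Gr_sym a b : Gr a b = Gr b a.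
Proof. by apply: SS_ext => i j; rewrite mulrC [Dy h a i j * _]mulrC. Qed.

Lemma Gr_ge0 a : 0 <= Gr a a.
Proof. by apply: SS_ge0 => i j; apply: addr_ge0; rewrite -expr2 sqr_ge0. Qed.

Lemma Gr_amgm a b t : 0 < t -> 2 * Gr a b <= t * Gr a a + t^-1 * Gr b b.
Proof.
move=> t0; rewrite /Gr -!SSZ -SSD; apply: SS_le => i j.
set x1 := Dx h a i j; set y1 := Dx h b i j; set x2 := Dy h a i j; set y2 := Dy h b i j.
have ti : t * t^-1 = 1 by rewrite mulfV // gt_eqF.
have ti0 : 0 < t^-1 by rewrite invr_gt0.
have H1 : 0 <= t^-1 * (t * x1 - y1) ^+ 2 by apply: mulr_ge0; [exact: ltW|exact: sqr_ge0].
have H2 : 0 <= t^-1 * (t * x2 - y2) ^+ 2 by apply: mulr_ge0; [exact: ltW|exact: sqr_ge0].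
have E : t * (x1 * x1 + x2 * x2) + t^-1 * (y1 * y1 + y2 * y2) - 2 * (x1 * y1 + x2 * y2)
   = t^-1 * (t * x1 - y1) ^+ 2 + t^-1 * (t * x2 - y2) ^+ 2.
  rewrite !expr2; set u := t^-1; have ti' : u * t = 1 by rewrite mulrC.
  transitivity ((u * t) * (t * (x1*x1 + x2*x2)) + u * (y1*y1+y2*y2) - (u*t) * 2 * (x1*y1+x2*y2)).
    by rewrite ti' !mul1r.
  ring.
by rewrite -subr_ge0 E addr_ge0.
Qed.

End W2.

Section W3.
Variable R : realType.
Variable n : nat.
Local Notation N := n.+1.
Variable h : R.
Hypothesis hne0 : h != 0.

Definition ridx (i : int) : 'I_N := inord `|((i - 1) %% N%:Z)%Z|%N.
Definition ext (W : 'M[R]_N) : grid R := fun i j => W (ridx i) (ridx j).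

Lemma Nz_gt0 : (0 : int) < N%:Z. Proof. by []. Qed.

Lemma ridx_cell (a : 'I_N) : ridx (a.+1)%:Z = a.
Proof.
apply: val_inj; rewrite /ridx PoszS1 modz_small; last by rewrite /= ltz_nat ltn_ord.
by rewrite /= inordK // ltn_ord.
Qed.

Lemma ridx_shift i : ridx (i + N%:Z) = ridx i.
Proof. by rewrite /ridx addrAC modzDr. Qed.

Lemma ridx_val i : ((ridx i).+1)%:Z = ((i - 1) %% N%:Z)%Z + 1.
Proof.
have H0 : (0 <= ((i - 1) %% N%:Z)%Z) := modz_ge0 _ (lt0r_neq0 Nz_gt0).
have H1 : (((i - 1) %% N%:Z)%Z < N%:Z) := ltz_pmod _ Nz_gt0.
rewrite /ridx inordK; last by rewrite -ltz_nat gez0_abs.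
by rewrite -addn1 PoszD gez0_abs.
Qed.

Lemma per_ext W : per N (ext W).
Proof. by split=> i j; rewrite /ext ridx_shift. Qed.

Lemma per_periodic (u : grid R) : per N u -> Defs.periodic N u.
Proof.
case=> Hx Hy.
have Kx : forall (k : nat) i j, u (i + k%:Z * N%:Z) j = u i j.
  elim=> [|k IH] i j; first by rewrite mul0r addr0.
  by rewrite -addn1 PoszD mulrDl mul1r addrA Hx IH.
have Ky : forall (k : nat) i j, u i (j + k%:Z * N%:Z) = u i j.
  elim=> [|k IH] i j; first by rewrite mul0r addr0.
  by rewrite -addn1 PoszD mulrDl mul1r addrA Hy IH.
have Ax : forall a i j, u (i + a * N%:Z) j = u i j.
  case=> k i j; first exact: Kx.
  rewrite NegzE -[in RHS](subrK ((k.+1)%:Z * N%:Z) i) Kx.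
  by rewrite mulNr.
have Ay : forall b i j, u i (j + b * N%:Z) = u i j.
  case=> k i j; first exact: Ky.
  rewrite NegzE -[in RHS](subrK ((k.+1)%:Z * N%:Z) j) Ky.
  by rewrite mulNr.
by move=> i j a b; rewrite Ax Ay.
Qed.

Lemma per_red (w : grid R) : per N w -> forall i j,
  w i j = w ((ridx i).+1)%:Z ((ridx j).+1)%:Z.
Proof.
move=> /per_periodic P i j.
rewrite !ridx_val.
have Ei := divz_eq (i - 1) N%:Z; have Ej := divz_eq (j - 1) N%:Z.
move: Ei Ej.
set qi := ((i - 1) %/ N%:Z)%Z; set ri := ((i - 1) %% N%:Z)%Z.
set qj := ((j - 1) %/ N%:Z)%Z; set rj := ((j - 1) %% N%:Z)%Z.
set NN := N%:Z => Ei Ej.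
rewrite -[RHS](P _ _ qi qj).
have -> : ri + 1 + qi * NN = i by lra.
have -> : rj + 1 + qj * NN = j by lra.
by [].
Qed.

Lemma per_eq (u v : grid R) : per N u -> per N v ->
  (forall a b : 'I_N, u (a.+1)%:Z (b.+1)%:Z = v (a.+1)%:Z (b.+1)%:Z) ->
  forall i j, u i j = v i j.
Proof. by move=> Pu Pv H i j; rewrite (per_red Pu) (per_red Pv). Qed.


Definition lapL (W : 'M[R]_N) : 'M[R]_N :=
  \matrix_(a, b) lap h (ext W) (a.+1)%:Z (b.+1)%:Z.

Fact lapL_semilinear : semilinear lapL.
Proof.
split=> [k W|W1 W2]; apply/matrixP => a b;
  rewrite !mxE /lap /dx /Dx /dy /Dy /ext !mxE; ring.
Qed.

HB.instance Definition _ := GRing.isSemilinear.Build R 'M[R]_N 'M[R]_N _ lapL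
  lapL_semilinear.

Definition sumL (W : 'M[R]_N) : R^o := \sum_(a < N) \sum_(b < N) W a b.

Fact sumL_semilinear : semilinear sumL.
Proof.
split=> [k W|W1 W2]; rewrite /sumL.
- rewrite [in RHS]/GRing.scale /= mulr_sumr; apply: eq_bigr => a _.
  rewrite mulr_sumr; apply: eq_bigr => b _; by rewrite mxE.
- rewrite -big_split; apply: eq_bigr => a _; rewrite -big_split.
  by apply: eq_bigr => b _; rewrite mxE.
Qed.

HB.instance Definition _ := GRing.isSemilinear.Build R 'M[R]_N R^o _ sumL
  sumL_semilinear.

Lemma SS_ext_mat W : SS N (ext W) = sumL W.
Proof.
rewrite /SS /sumL; apply: eq_bigr => a _; apply: eq_bigr => b _.
by rewrite /ext !ridx_cell.
Qed.

Lemma lapL_ker W : lapL W = 0 -> forall a b, W a b = W ord0 ord0.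
Proof.
move=> H0.
set psi := ext W.
have Pp : per N psi := per_ext W.
have L0 : forall i j, lap h psi i j = 0.
  apply: (per_eq (per_lap h Pp) (per_const N 0)) => a b.
  by move/matrixP: H0 => /(_ a b); rewrite !mxE.
have G0 : Gr N h psi psi = 0.
  apply/eqP; rewrite -oppr_eq0 -(sbp_lap h Pp Pp).
  by rewrite (@SS_ext _ N _ (fun _ _ => 0)) ?SS0 // => i j; rewrite L0 mul0r.
have T0 : forall a b : 'I_N, Dx h psi (a.+1)%:Z (b.+1)%:Z = 0 /\ Dy h psi (a.+1)%:Z (b.+1)%:Z = 0.
  move=> a b.
  have Hi : forall a : 'I_N, 0 <= \sum_(b < N)
      (Dx h psi (a.+1)%:Z (b.+1)%:Z * Dx h psi (a.+1)%:Z (b.+1)%:Z +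
       Dy h psi (a.+1)%:Z (b.+1)%:Z * Dy h psi (a.+1)%:Z (b.+1)%:Z).
    by move=> a'; apply: sumr_ge0 => b' _; apply: addr_ge0; rewrite -expr2 sqr_ge0.
  have := psumr_eq0P (fun a' _ => Hi a') G0 (i := a) isT.
  move/(psumr_eq0P (fun b' _ => addr_ge0 (msq_ge0 _) (msq_ge0 _))) => /(_ b isT).
  move/eqP; rewrite paddr_eq0 ?msq_ge0 // !msq_eq0 => /andP[/eqP H1 /eqP H2].
  by split.
have Dx0 : forall i j, Dx h psi i j = 0.
  by apply: (per_eq (per_Dx h Pp) (per_const N 0)) => a b; case: (T0 a b).
have Dy0 : forall i j, Dy h psi i j = 0.
  by apply: (per_eq (per_Dy h Pp) (per_const N 0)) => a b; case: (T0 a b).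
have Sx : forall i j, psi (i + 1) j = psi i j.
  move=> i j; have := Dx0 i j; rewrite /Dx => /eqP; rewrite mulf_eq0 invr_eq0 (negbTE hne0) orbF subr_eq0.
  by move/eqP.
have Sy : forall i j, psi i (j + 1) = psi i j.
  move=> i j; have := Dy0 i j; rewrite /Dy => /eqP; rewrite mulf_eq0 invr_eq0 (negbTE hne0) orbF subr_eq0.
  by move/eqP.
have Kx : forall (k : nat) j, psi (k.+1)%:Z j = psi 1 j.
  by elim=> [|k IH] j //; rewrite -addn1 PoszD Sx IH.
have Ky : forall (k : nat) i, psi i (k.+1)%:Z = psi i 1.
  by elim=> [|k IH] i //; rewrite -addn1 PoszD Sy IH.
move=> a b.
have E : psi (a.+1)%:Z (b.+1)%:Z = psi 1 1 by rewrite Kx Ky.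
have E0 : ridx 1 = ord0 by exact: (ridx_cell ord0).
move: E; rewrite /psi /ext !ridx_cell E0 => ->.
by [].
Qed.


Lemma SS_lap_zero u : per N u -> SS N (lap h u) = 0.
Proof.
move=> Pu.
rewrite (@SS_ext _ N _ (fun i j => lap h u i j * 1)); last by move=> i j; rewrite mulr1.
rewrite (sbp_lap h Pu (per_const N 1)) /Gr.
rewrite (@SS_ext _ N _ (fun _ _ => 0)) ?SS0 ?oppr0 // => i j.
by rewrite /Dx /Dy !subrr !mul0r ?mulr0 ?addr0.
Qed.

Lemma lap_surj (v : grid R) : per N v -> SS N v = 0 ->
  exists psi, per N psi /\ SS N psi = 0 /\ forall i j, - lap h psi i j = v i j.
Proof.
move=> Pv Sv.
pose f := linfun lapL; pose g := linfun sumL.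
have Hsub : (limg f <= lker g)%VS.
  apply/subvP => x /memv_imgP [W _ ->]; rewrite memv_ker !lfunE /=.
  rewrite /sumL -[X in _ == X](SS_lap_zero (per_ext W)) /SS.
  by apply/eqP; apply: eq_bigr => a _; apply: eq_bigr => b _; rewrite mxE.
have Hker : (\dim (lker f) <= 1)%N.
  have : (lker f <= <[const_mx 1 : 'M[R]_N]>)%VS.
    apply/subvP => W; rewrite memv_ker lfunE /= => /eqP /lapL_ker H.
    apply/vlineP; exists (W ord0 ord0); apply/matrixP => a b.
    by rewrite !mxE H mulr1.
  move/dimvS; rewrite dim_vline; case: (_ != 0) => //= H.
  exact: (leq_trans H).
have Himg : (1 <= \dim (limg g))%N.
  have : (<[g (const_mx 1)]> <= limg g)%VS by rewrite -memvE memv_img ?memvf.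
  move/dimvS; rewrite dim_vline; apply: leq_trans.
  have -> : g (const_mx 1) = (N * N)%:R.
    rewrite lfunE /= /sumL -SSone /SS; apply: eq_bigr => a _; apply: eq_bigr => b _.
    by rewrite mxE.
  by rewrite pnatr_eq0.
have Df := limg_ker_dim f fullv; have Dg := limg_ker_dim g fullv.
rewrite !capfv in Df Dg.
have Heq : limg f = lker g.
  apply/eqP; rewrite eqEdim Hsub /=.
  move: Df Dg Hker Himg; set a := \dim (lker f); set b := \dim (limg f);
    set c := \dim (lker g); set d := \dim (limg g); set e := \dim _.
  move=> Df Dg Hk Hi.
  have Dg' : (c + d = e)%N by rewrite -Dg; congr (_ + _); rewrite capfv.
  lia.
pose Mv : 'M[R]_N := \matrix_(a, b) - v (a.+1)%:Z (b.+1)%:Z.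
have : Mv \in lker g.
  have E : sumL Mv = - SS N v.
    rewrite /sumL /SS -sumrN; apply: eq_bigr => a _; rewrite -sumrN.
    by apply: eq_bigr => b _; rewrite mxE.
  by rewrite memv_ker lfunE /= E Sv oppr0.
rewrite -Heq => /memv_imgP [W _ EW].
pose c := SS N (ext W) / (N * N)%:R.
exists (fun i j => ext W i j - c); split; [|split].
- exact: (per_sub (per_ext W) (per_const N c)).
- rewrite SSB (@SS_ext _ N (fun _ _ => c) (fun _ _ => c * 1)); last by move=> i j; rewrite mulr1.
  rewrite SSZ SSone /c mulfVK ?subrr //.
  by rewrite pnatr_eq0.
- apply: (per_eq (u := fun i j => - lap h (fun i j => ext W i j - c) i j)) => //.
    by apply: (per_pw1 (fun x => - x)); apply: per_lap; exact: (per_sub (per_ext W) (per_const N c)).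
  move=> a b.
  have -> : lap h (fun i j => ext W i j - c) (a.+1)%:Z (b.+1)%:Z = lapL W a b.
    by rewrite mxE /lap /dx /Dx /dy /Dy; ring.
  by rewrite -lfunE -/f -EW mxE opprK.
Qed.

End W3.

Section W4.
Variable R : realType.

Lemma ln_le_sub1 (x : R) : 0 < x -> ln x <= x - 1.
Proof.
move=> x0; have := expR_ge1Dx (ln x); rewrite lnK ?posrE //.
by move=> H; rewrite lerBrDl.
Qed.

Lemma xlnx_conv (k x y : R) : 0 < k -> 0 < x -> 0 < y ->
  y * ln (k * y) - x * ln (k * x) <= (ln (k * y) + 1) * (y - x).
Proof.
move=> k0 x0 y0.
have E : ln (k * x) = ln (k * y) - ln (y / x).
  have -> : k * x = (k * y) * (y / x)^-1 by rewrite invf_div; field; rewrite gt_eqF.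
  rewrite lnM ?posrE ?mulr_gt0 ?invr_gt0 ?divr_gt0 // lnV ?posrE ?divr_gt0 //.
have L1 := ln_le_sub1 (divr_gt0 y0 x0).
have L2 : x * ln (y / x) <= x * (y / x - 1) by rewrite ler_pM2l.
have L3 : x * (y / x - 1) = y - x by rewrite mulrBr mulrCA mulfV ?gt_eqF // mulr1 mulr1.
rewrite E; lra.
Qed.

Lemma face_conv (s s' d d' : R) : 0 < s -> 0 < s' ->
  kappa s' * d' ^+ 2 - kappa s * d ^+ 2 <=
  kappa' s' * d' ^+ 2 * (s' - s) + 2 * (kappa s' * d') * (d' - d).
Proof.
move=> s0 s'0.
rewrite -subr_ge0.
have -> : kappa' s' * d' ^+ 2 * (s' - s) + 2 * (kappa s' * d') * (d' - d) -
    (kappa s' * d' ^+ 2 - kappa s * d ^+ 2) = s * (d / s - d' / s') ^+ 2 / 36.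
  rewrite /kappa /kappa'; field.
  by rewrite !gt_eqF.
by apply: divr_ge0 => //; apply: mulr_ge0; [exact: ltW|exact: sqr_ge0].
Qed.


Lemma alpha_gt0 (p : model R) : 0 < M0 p -> 0 < N0 p -> 0 < alpha p.
Proof.
move=> M0p N0p; rewrite /alpha mulr_gt0 ?pi_gt0 // exprn_gt0 //.
by rewrite ltr_wpDl ?sqrtr_ge0 // divr_gt0.
Qed.

Lemma beta_gt0 (p : model R) : 0 < M0 p -> 0 < N0 p -> 0 < beta p.
Proof.
move=> M0p N0p; rewrite /beta; have := sqrtr_ge0 (M0 p / pi); lra.
Qed.

Lemma S_conv (p : model R) a b a' b' : 0 < M0 p -> 0 < N0 p ->
  0 < a -> 0 < b -> a + b < 1 -> 0 < a' -> 0 < b' -> a' + b' < 1 ->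
  Sfun p a' b' - Sfun p a b <= dSa p a' b' * (a' - a) + dSb p a' b' * (b' - b).
Proof.
move=> M0p N0p a0 b0 ab a'0 b'0 ab'.
have kA : 0 < alpha p / M0 p by rewrite divr_gt0 // alpha_gt0.
have kB : 0 < beta p / N0 p by rewrite divr_gt0 // beta_gt0.
have I1 := xlnx_conv kA a0 a'0.
have I2 := xlnx_conv kB b0 b'0.
have w0 : 0 < 1 - a - b by lra.
have w'0 : 0 < 1 - a' - b' by lra.
have I3 := xlnx_conv ltr01 w0 w'0.
rewrite !mul1r in I3.
have EA : forall x, alpha p * x / M0 p = alpha p / M0 p * x by move=> x; rewrite mulrAC.
have EB : forall x, beta p * x / N0 p = beta p / N0 p * x by move=> x; rewrite mulrAC.
rewrite /Sfun /dSa /dSb !EA !EB.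
set LA := ln (alpha p / M0 p * a); set LA' := ln (alpha p / M0 p * a').
set LB := ln (beta p / N0 p * b); set LB' := ln (beta p / N0 p * b').
set LW := ln (1 - a - b); set LW' := ln (1 - a' - b').
rewrite -/LA -/LA' in I1; rewrite -/LB -/LB' in I2; rewrite -/LW -/LW' in I3.
have iM : 0 < (M0 p)^-1 by rewrite invr_gt0.
have iN : 0 < (N0 p)^-1 by rewrite invr_gt0.
have J1 := ler_pM2l iM; have J2 := ler_pM2l iN.
have K1 : (M0 p)^-1 * (a' * LA' - a * LA) <= (M0 p)^-1 * ((LA' + 1) * (a' - a)) by rewrite J1.
have K2 : (N0 p)^-1 * (b' * LB' - b * LB) <= (N0 p)^-1 * ((LB' + 1) * (b' - b)) by rewrite J2.
have E : a' / M0 p * LA' + b' / N0 p * LB' + (1 - a' - b') * LW' -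
  (a / M0 p * LA + b / N0 p * LB + (1 - a - b) * LW) -
  (((M0 p)^-1 * LA' + (M0 p)^-1 - LW' - 1) * (a' - a) +
   ((N0 p)^-1 * LB' + (N0 p)^-1 - LW' - 1) * (b' - b)) =
  ((M0 p)^-1 * (a' * LA' - a * LA) - (M0 p)^-1 * ((LA' + 1) * (a' - a))) +
  ((N0 p)^-1 * (b' * LB' - b * LB) - (N0 p)^-1 * ((LB' + 1) * (b' - b))) +
  ((1 - a' - b') * LW' - (1 - a - b) * LW - (LW' + 1) * ((1 - a' - b') - (1 - a - b))).
  ring.
rewrite -subr_le0 E; lra.
Qed.

Lemma H_ineq (p : model R) a b a0 b0 a' b' :
  0 < chi12 p -> 0 < chi13 p -> 0 < chi23 p ->
  Hfun p a' b' - Hfun p a b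
  - (dHa p (2 * a - a0) (2 * b - b0) * (a' - a) + dHb p (2 * a - a0) (2 * b - b0) * (b' - b))
  + (2 * chi12 p + 3 * chi13 p + chi23 p) / 2 * ((a' - a) ^+ 2 - (a - a0) ^+ 2)
  + (2 * chi12 p + chi13 p + 3 * chi23 p) / 2 * ((b' - b) ^+ 2 - (b - b0) ^+ 2)
  <= (3 * chi13 p + 3 * chi23 p + 2 * chi12 p) * ((a' - a) ^+ 2 + (b' - b) ^+ 2).
Proof.
move=> c12 c13 c23.
rewrite /Hfun /dHa /dHb.
set x := a' - a; set y := b' - b; set u := a - a0; set w := b - b0.
have -> : a' = a + x by rewrite /x addrC subrK.
have -> : b' = b + y by rewrite /y addrC subrK.
have -> : a0 = a - u by rewrite /u opprB addrC subrK.
have -> : b0 = b - w by rewrite /w opprB addrC subrK.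
have P1 : 0 <= (2 * chi13 p + 2 * chi23 p) * (x + y) ^+ 2 by apply: mulr_ge0; [lra|exact: sqr_ge0].
have P2 : 0 <= (2 * chi12 p) * (x - y) ^+ 2 by apply: mulr_ge0; [lra|exact: sqr_ge0].
have P3 : 0 <= (2 * chi12 p) * (x + w) ^+ 2 by apply: mulr_ge0; [lra|exact: sqr_ge0].
have P3b : 0 <= (2 * chi13 p + 2 * chi23 p) * (x - w) ^+ 2 by apply: mulr_ge0; [lra|exact: sqr_ge0].
have P4 : 0 <= (2 * chi12 p) * (y + u) ^+ 2 by apply: mulr_ge0; [lra|exact: sqr_ge0].
have P4b : 0 <= (2 * chi13 p + 2 * chi23 p) * (y - u) ^+ 2 by apply: mulr_ge0; [lra|exact: sqr_ge0].
have P5 : 0 <= chi13 p * (x - u) ^+ 2 by apply: mulr_ge0; [lra|exact: sqr_ge0].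
have P6 : 0 <= chi23 p * (y - w) ^+ 2 by apply: mulr_ge0; [lra|exact: sqr_ge0].
have P7 : 0 <= chi12 p * u ^+ 2 by apply: mulr_ge0; [lra|exact: sqr_ge0].
have P8 : 0 <= chi12 p * w ^+ 2 by apply: mulr_ge0; [lra|exact: sqr_ge0].
have P9 : 0 <= chi13 p * x ^+ 2 by apply: mulr_ge0; [lra|exact: sqr_ge0].
have P10 : 0 <= chi23 p * y ^+ 2 by apply: mulr_ge0; [lra|exact: sqr_ge0].
have P11 : 0 <= chi13 p * y ^+ 2 by apply: mulr_ge0; [lra|exact: sqr_ge0].
have P12 : 0 <= chi23 p * x ^+ 2 by apply: mulr_ge0; [lra|exact: sqr_ge0].
have P13 : 0 <= chi12 p * x ^+ 2 by apply: mulr_ge0; [lra|exact: sqr_ge0].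
have P14 : 0 <= chi12 p * y ^+ 2 by apply: mulr_ge0; [lra|exact: sqr_ge0].
have P15 : 0 <= chi13 p * u ^+ 2 by apply: mulr_ge0; [lra|exact: sqr_ge0].
have P16 : 0 <= chi23 p * w ^+ 2 by apply: mulr_ge0; [lra|exact: sqr_ge0].
have P17 : 0 <= chi23 p * u ^+ 2 by apply: mulr_ge0; [lra|exact: sqr_ge0].
have P18 : 0 <= chi13 p * w ^+ 2 by apply: mulr_ge0; [lra|exact: sqr_ge0].
clearbody x y u w.
lra.
Qed.

End W4.

Section W5.
Variable R : realType.
Variable N : nat.
Variable h : R.

Lemma grad_conv (u u' : grid R) : per N u -> per N u' ->
  (forall i j, 0 < u i j) -> (forall i j, 0 < u' i j) ->
  SS N (fun i j => grad_term h u' i j * 1) - SS N (fun i j => grad_term h u i j * 1) <=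
  SS N (fun i j => Tk h u' i j * (u' i j - u i j)).
Proof.
move=> Pu Pu' Hu Hu'.
set w := fun i j => u' i j - u i j.
have Pw : per N w by apply: per_sub.
set F1 := fun i j => kappa' (Ax u' i j) * (Dx h u' i j) ^+ 2.
set F2 := fun i j => kappa (Ax u' i j) * Dx h u' i j.
set G1 := fun i j => kappa' (Ay u' i j) * (Dy h u' i j) ^+ 2.
set G2 := fun i j => kappa (Ay u' i j) * Dy h u' i j.
have PF1 : per N F1 by apply: per_mul; [exact: (per_pw1 (@kappa' R) (per_Ax Pu'))|exact: (per_pw1 (fun a => a ^+ 2) (per_Dx h Pu'))].
have PF2 : per N F2 by apply: per_mul; [exact: (per_pw1 (@kappa R) (per_Ax Pu'))|exact: (per_Dx h Pu')].
have PG1 : per N G1 by apply: per_mul; [exact: (per_pw1 (@kappa' R) (per_Ay Pu'))|exact: (per_pw1 (fun a => a ^+ 2) (per_Dy h Pu'))].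
have PG2 : per N G2 by apply: per_mul; [exact: (per_pw1 (@kappa R) (per_Ay Pu'))|exact: (per_Dy h Pu')].
have ET : SS N (fun i j => Tk h u' i j * w i j) =
   SS N (fun i j => F1 i j * Ax w i j + 2 * (F2 i j * Dx h w i j) +
                    G1 i j * Ay w i j + 2 * (G2 i j * Dy h w i j)).
  rewrite (@SS_ext _ N _ (fun i j => ax F1 i j * w i j - 2 * (dx h F2 i j * w i j)
       + ay G1 i j * w i j - 2 * (dy h G2 i j * w i j))); last first.
    by move=> i j; rewrite /Tk; ring.
  rewrite SSB SSD SSB !SSZ sbp_ax // sbp_dx // sbp_ay // sbp_dy //.
  rewrite !SSD !SSZ; ring.
have EG : forall v : grid R, per N v -> SS N (fun i j => grad_term h v i j * 1) =
   SS N (fun i j => kappa (Ax v i j) * (Dx h v i j) ^+ 2 + kappa (Ay v i j) * (Dy h v i j) ^+ 2).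
  move=> v Pv.
  have P1 : per N (fun i j => kappa (Ax v i j) * (Dx h v i j) ^+ 2).
    by apply: per_mul; [exact: (per_pw1 (@kappa R) (per_Ax Pv))|exact: (per_pw1 (fun a => a ^+ 2) (per_Dx h Pv))].
  have P2 : per N (fun i j => kappa (Ay v i j) * (Dy h v i j) ^+ 2).
    by apply: per_mul; [exact: (per_pw1 (@kappa R) (per_Ay Pv))|exact: (per_pw1 (fun a => a ^+ 2) (per_Dy h Pv))].
  rewrite (@SS_ext _ N _ (fun i j => ax (fun i j => kappa (Ax v i j) * (Dx h v i j) ^+ 2) i j * 1
       + ay (fun i j => kappa (Ay v i j) * (Dy h v i j) ^+ 2) i j * 1)); last first.
    by move=> i j; rewrite /grad_term mulrDl.
  rewrite SSD sbp_ax ?sbp_ay //; try exact: per_const.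
  rewrite -SSD; apply: SS_ext => i j; rewrite /Ax /Ay.
  have -> : ((1 : R) + 1) / 2 = 1 by lra.
  by rewrite !mulr1.
rewrite ET !EG // -SSB; apply: SS_le => i j.
have Hs : forall v : grid R, (forall i j, 0 < v i j) -> 0 < Ax v i j /\ 0 < Ay v i j.
  move=> v Hv; rewrite /Ax /Ay; split; apply: divr_gt0 => //; apply: addr_gt0; exact: Hv.
have [Ax0 Ay0] := Hs u Hu; have [Ax0' Ay0'] := Hs u' Hu'.
have C1 := face_conv (Dx h u i j) (Dx h u' i j) Ax0 Ax0'.
have C2 := face_conv (Dy h u i j) (Dy h u' i j) Ay0 Ay0'.
have EAx : Ax w i j = Ax u' i j - Ax u i j by rewrite /Ax /w; ring.
have EAy : Ay w i j = Ay u' i j - Ay u i j by rewrite /Ay /w; ring.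
have EDx : Dx h w i j = Dx h u' i j - Dx h u i j by rewrite /Dx /w; ring.
have EDy : Dy h w i j = Dy h u' i j - Dy h u i j by rewrite /Dy /w; ring.
rewrite EAx EAy EDx EDy /F1 /F2 /G1 /G2.
lra.
Qed.

End W5.

Section W6.
Variable R : realType.
Variable n : nat.
Local Notation N := n.+1.
Variable h L : R.
Hypothesis h0 : 0 < h.

Lemma innerE (v w : grid R) : inner N h v w = h ^+ 2 * SS N (fun i j => v i j * w i j).
Proof. by []. Qed.

Lemma meanE (v : grid R) : mean N h L v = h ^+ 2 * SS N v / L ^+ 2.
Proof.
rewrite /mean innerE (@SS_ext _ N (fun i j => v i j * Defs.one R i j) v) // => i j.
by rewrite /Defs.one mulr1.
Qed.

Lemma invlap_prop (v : grid R) : per N v -> SS N v = 0 ->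
  per N (invlap N h L v) /\ forall i j, - lap h (invlap N h L v) i j = v i j.
Proof.
move=> Pv Sv.
have [psi [Pp [S0 Hl]]] := lap_surj (lt0r_neq0 h0) Pv Sv.
have := @epsilon_spec (grid R) (inhabits (fun _ _ => 0 : R))
    (fun psi : grid R => Defs.periodic N psi /\ mean N h L psi = 0 /\
                       forall i j, - lap h psi i j = v i j).
case.
  exists psi; split; first exact: per_periodic.
  by split => //; rewrite meanE S0 mulr0 mul0r.
move=> Hper [_ Hlap]; split => //; exact: periodic_per.
Qed.

Lemma neg1_normE (v : grid R) : per N v -> SS N v = 0 ->
  neg1_norm N h L v ^+ 2 = h ^+ 2 * Gr N h (invlap N h L v) (invlap N h L v).
Proof.
move=> Pv Sv; have [Pp Hl] := invlap_prop Pv Sv.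
have E : neg1_inner N h L v v = h ^+ 2 * Gr N h (invlap N h L v) (invlap N h L v).
  rewrite /neg1_inner innerE; congr (_ * _).
  rewrite -[RHS]opprK -(sbp_lap h Pp Pp) -SSN; apply: SS_ext => i j.
  by rewrite -Hl mulNr.
rewrite /neg1_norm E sqr_sqrtr //; apply: mulr_ge0; [exact: sqr_ge0|exact: Gr_ge0].
Qed.

Lemma norm2E (v : grid R) : norm2 N h v ^+ 2 = h ^+ 2 * SS N (fun i j => v i j * v i j).
Proof.
rewrite /norm2 sqr_sqrtr // innerE; apply: mulr_ge0; first exact: sqr_ge0.
by apply: SS_ge0 => i j; exact: msq_ge0.
Qed.


Lemma comp_step (M dt A K : R) (a0 a a' mu : grid R) :
  0 < M -> 0 < dt -> 0 < K -> M * K ^+ 2 / 4 <= A ->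
  per N a0 -> per N a -> per N a' -> per N mu ->
  SS N a0 = SS N a -> SS N a = SS N a' ->
  (forall i j, (3 * a' i j - 4 * a i j + a0 i j) / (2 * dt) = M * lap h mu i j) ->
  let v := fun i j => (a' i j - a i j) / dt in
  let vp := fun i j => (a i j - a0 i j) / dt in
  let Y := Gr N h (invlap N h L v) (invlap N h L v) in
  let Yp := Gr N h (invlap N h L vp) (invlap N h L vp) in
  let X := Gr N h (fun i j => a' i j - a i j) (fun i j => a' i j - a i j) in
  neg1_norm N h L v ^+ 2 = h ^+ 2 * Y /\ neg1_norm N h L vp ^+ 2 = h ^+ 2 * Yp /\
  0 <= Y /\ 0 <= Yp /\ 0 <= X /\
  SS N (fun i j => mu i j * (a' i j - a i j)) <= - (dt / M) * (5 / 4 * Y - 1 / 4 * Yp) /\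
  K * SS N (fun i j => (a' i j - a i j) * (a' i j - a i j)) <= A * dt * X + dt / M * Y.
Proof.
move=> M0 dt0 K0 HA P0 P P' Pmu S0 S1 Hsch; cbv zeta.
have Pd : per N (fun i j => a' i j - a i j) by apply: per_sub.
have Pdp : per N (fun i j => a i j - a0 i j) by apply: per_sub.
have Pv : per N (fun i j => (a' i j - a i j) / dt) by apply: (per_pw1 (fun x => x / dt)).
have Pvp : per N (fun i j => (a i j - a0 i j) / dt) by apply: (per_pw1 (fun x => x / dt)).
have Sv : SS N (fun i j => (a' i j - a i j) / dt) = 0.
  by rewrite SSZr SSB S1 subrr mul0r.
have Svp : SS N (fun i j => (a i j - a0 i j) / dt) = 0.
  by rewrite SSZr SSB S0 subrr mul0r.
have [Pps Hps] := invlap_prop Pv Sv.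
have [Ppp Hpp] := invlap_prop Pvp Svp.
rewrite (neg1_normE Pv Sv) (neg1_normE Pvp Svp).
set psi := invlap N h L (fun i j => (a' i j - a i j) / dt) in Pps Hps *.
set psp := invlap N h L (fun i j => (a i j - a0 i j) / dt) in Ppp Hpp *.
set Y := Gr N h psi psi; set Yp := Gr N h psp psp.
set X := Gr N h (fun i j => a' i j - a i j) (fun i j => a' i j - a i j).
have dtne : dt != 0 by rewrite gt_eqF.
have Ed : forall i j, a' i j - a i j = - dt * lap h psi i j.
  by move=> i j; rewrite mulNr -mulrN Hps mulrC divfK.
have Edp : forall i j, a i j - a0 i j = - dt * lap h psp i j.
  by move=> i j; rewrite mulNr -mulrN Hpp mulrC divfK.
have Y0 : 0 <= Y by exact: Gr_ge0.
have Yp0 : 0 <= Yp by exact: Gr_ge0.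
have X0 : 0 <= X by exact: Gr_ge0.
(* scheme tested against psi *)
have E1 : (3 * Y - Gr N h psp psi) / 2 = - M * Gr N h mu psi.
  have L1 : SS N (fun i j => (3 * a' i j - 4 * a i j + a0 i j) / (2 * dt) * psi i j) =
            (3 * Y - Gr N h psp psi) / 2.
    rewrite (@SS_ext _ N _ (fun i j => (3 / 2) * - (lap h psi i j * psi i j)
                                 - (1 / 2) * - (lap h psp i j * psi i j))); last first.
      move=> i j.
      have -> : 3 * a' i j - 4 * a i j + a0 i j = 3 * (a' i j - a i j) - (a i j - a0 i j) by ring.
      rewrite Ed Edp; field; exact: dtne.
    rewrite SSB !SSZ !SSN (sbp_lap h Pps Pps) (sbp_lap h Ppp Pps) /Y; ring.
  rewrite -L1 (@SS_ext _ N _ (fun i j => M * (lap h mu i j * psi i j))); last first.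
    by move=> i j; rewrite Hsch mulrA.
  by rewrite SSZ (sbp_lap h Pmu Pps) mulrN mulNr.
have E2 : SS N (fun i j => mu i j * (a' i j - a i j)) = dt * Gr N h mu psi.
  rewrite (@SS_ext _ N _ (fun i j => - dt * (lap h psi i j * mu i j))); last first.
    by move=> i j; rewrite Ed; ring.
  by rewrite SSZ (sbp_lap h Pps Pmu) Gr_sym; ring.
have E3 : SS N (fun i j => (a' i j - a i j) * (a' i j - a i j)) =
          dt * Gr N h (fun i j => a' i j - a i j) psi.
  rewrite (@SS_ext _ N _ (fun i j => - dt * (lap h psi i j * (a' i j - a i j)))); last first.
    by move=> i j; rewrite {1}Ed; ring.
  by rewrite SSZ (sbp_lap h Pps Pd) Gr_sym; ring.
have AM1 := Gr_amgm N h psp psi ltr01.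
rewrite invr1 !mul1r -/Yp -/Y in AM1.
have A0 : 0 < A by apply: lt_le_trans HA; apply: divr_gt0 => //; apply: mulr_gt0 => //; exact: exprn_gt0.
set t := 2 * A / K.
have t0 : 0 < t by rewrite /t divr_gt0 // mulr_gt0.
have AM2 := Gr_amgm N h (fun i j => a' i j - a i j) psi t0.
rewrite -/X -/Y in AM2.
do 5 (split => //); split.
- rewrite E2.
  have GM : Gr N h mu psi = - ((3 * Y - Gr N h psp psi) / 2) / M.
    rewrite E1; field; exact: lt0r_neq0.
  rewrite GM.
  have Hdm : 0 < dt / M by rewrite divr_gt0.
  have -> : dt * (- ((3 * Y - Gr N h psp psi) / 2) / M) = - (dt / M) * ((3 * Y - Gr N h psp psi) / 2).
    field; exact: lt0r_neq0.
  rewrite !mulNr lerN2 ler_pM2l //; lra.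
- rewrite E3.
  (* K * dt * G <= dt/2 * (K t X + K/t Y) = A dt X + dt K^2/(4A) Y *)
  have Kt : K * t = 2 * A by rewrite /t; field; exact: lt0r_neq0.
  have Kti : K * t^-1 = K ^+ 2 / (2 * A) by rewrite /t invf_div; field; rewrite !gt_eqF.
  have B1 : K ^+ 2 / (2 * A) <= 2 / M.
    rewrite ler_pdivrMr ?mulr_gt0 // mulrAC ler_pdivlMr //.
    by move: HA; rewrite ler_pdivrMr //; lra.
  have : K * dt * (2 * Gr N h (fun i j => a' i j - a i j) psi) <= K * dt * (t * X + t^-1 * Y).
    by rewrite ler_pM2l // mulr_gt0.
  have C : K * dt * (t * X + t^-1 * Y) = dt * ((K * t) * X + (K * t^-1) * Y) by ring.
  rewrite C Kt Kti => H.
  have H2 : dt * (K ^+ 2 / (2 * A) * Y) <= dt * (2 / M * Y).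
    by rewrite ler_pM2l // ler_wpM2r.
  have -> : dt / M * Y = (dt * (2 / M * Y)) / 2 by field; exact: lt0r_neq0.
  lra.
Qed.

End W6.

Unset Implicit Arguments. Set Strict Implicit.
Theorem theorem4p1 (R : realType) (L : R) (N : nat) (h : R) (p : model R)
    (Mob1 Mob2 dt A1 A2 : R) (pm pn pp : pair R) :
  0 < L -> (0 < N)%N -> h = L / N%:R ->
  0 < M0 p -> 0 < N0 p ->
  0 < eps1 p -> 0 < eps2 p -> 0 < eps3 p ->
  0 < chi12 p -> 0 < chi13 p -> 0 < chi23 p ->
  0 < 4 * chi13 p * chi23 p - (chi12 p - chi13 p - chi23 p) ^+ 2 ->
  0 < Mob1 -> 0 < Mob2 -> 0 < dt ->
  Mob1 * (3 * chi13 p + 3 * chi23 p + 2 * chi12 p) ^+ 2 / 4 <= A1 ->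
  Mob2 * (3 * chi13 p + 3 * chi23 p + 2 * chi12 p) ^+ 2 / 4 <= A2 ->
  in_gibbs N pm -> in_gibbs N pn -> in_gibbs N pp ->
  mean N h L pm.1 = mean N h L pn.1 -> mean N h L pn.1 = mean N h L pp.1 ->
  mean N h L pm.2 = mean N h L pn.2 -> mean N h L pn.2 = mean N h L pp.2 ->
  bdf2_step h p Mob1 Mob2 dt A1 A2 pm pn pp ->
  Eh N h L p Mob1 Mob2 dt pp pn <= Eh N h L p Mob1 Mob2 dt pn pm.
Proof.
move=> L0 N0 hE M0p N0p e1p e2p e3p c12 c13 c23 cdet M1p M2p dt0 HA1 HA2 Gm Gn Gp m1a m1b m2a m2b Hs.
case: N N0 hE Gm Gn Gp m1a m1b m2a m2b Hs => [//|n] N0n hE Gm Gn Gp m1a m1b m2a m2b Hs.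
have h0 : 0 < h by rewrite hE divr_gt0 // ltr0n.
case: Gm => [/periodic_per Pm1 [/periodic_per Pm2 Hm]].
case: Gn => [/periodic_per Pn1 [/periodic_per Pn2 Hn]].
case: Gp => [/periodic_per Pp1 [/periodic_per Pp2 Hp]].
have SSeq : forall u v : grid R, mean n.+1 h L u = mean n.+1 h L v -> SS n.+1 u = SS n.+1 v.
  move=> u v; rewrite !meanE => E.
  apply: (mulfI (x := h ^+ 2)); first by rewrite expf_neq0 // lt0r_neq0.
  apply: (mulIf (x := (L ^+ 2)^-1)); first by rewrite invr_eq0 expf_neq0 // lt0r_neq0.
  exact: E.
move/SSeq in m1a; move/SSeq in m1b; move/SSeq in m2a; move/SSeq in m2b.
pose hat1 := fun i j => 2 * pn.1 i j - pm.1 i j.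
pose hat2 := fun i j => 2 * pn.2 i j - pm.2 i j.
pose mu1 := fun i j => dG1 h p pp i j + dHa p (hat1 i j) (hat2 i j)
      - A1 * dt * lap h (fun i j => pp.1 i j - pn.1 i j) i j.
pose mu2 := fun i j => dG2 h p pp i j + dHb p (hat1 i j) (hat2 i j)
      - A2 * dt * lap h (fun i j => pp.2 i j - pn.2 i j) i j.
have Hs1 : forall i j, (3 * pp.1 i j - 4 * pn.1 i j + pm.1 i j) / (2 * dt) = Mob1 * lap h mu1 i j.
  by move=> i j; case: (Hs i j).
have Hs2 : forall i j, (3 * pp.2 i j - 4 * pn.2 i j + pm.2 i j) / (2 * dt) = Mob2 * lap h mu2 i j.
  by move=> i j; case: (Hs i j).
have Pu3 : forall ph : pair R, per n.+1 ph.1 -> per n.+1 ph.2 -> per n.+1 (u3 ph).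
  by move=> ph P1 P2; rewrite /u3; apply: per_sub => //; apply: per_sub => //; exact: per_const.
have PdG1 : per n.+1 (dG1 h p pp).
  rewrite /dG1; apply: per_sub; [apply: per_add|].
  - exact: (per_pw2 (dSa p) Pp1 Pp2).
  - by apply: per_scal; apply: per_Tk.
  - by apply: per_scal; apply: per_Tk; apply: Pu3.
have PdG2 : per n.+1 (dG2 h p pp).
  rewrite /dG2; apply: per_sub; [apply: per_add|].
  - exact: (per_pw2 (dSb p) Pp1 Pp2).
  - by apply: per_scal; apply: per_Tk.
  - by apply: per_scal; apply: per_Tk; apply: Pu3.
have Phat1 : per n.+1 hat1 by apply: per_sub => //; apply: per_scal.
have Phat2 : per n.+1 hat2 by apply: per_sub => //; apply: per_scal.
have Pmu1 : per n.+1 mu1.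
  apply: per_sub; [apply: per_add => //|].
  - exact: (per_pw2 (dHa p) Phat1 Phat2).
  - by apply: per_scal; apply: per_lap; apply: per_sub.
have Pmu2 : per n.+1 mu2.
  apply: per_sub; [apply: per_add => //|].
  - exact: (per_pw2 (dHb p) Phat1 Phat2).
  - by apply: per_scal; apply: per_lap; apply: per_sub.
set K := 3 * chi13 p + 3 * chi23 p + 2 * chi12 p.
have K0 : 0 < K by rewrite /K; lra.
have [Nv1 [Nvp1 [Y10 [Yp10 [X10 [Smu1 Sd1]]]]]] :=
  comp_step L h0 M1p dt0 K0 HA1 Pm1 Pn1 Pp1 Pmu1 m1a m1b Hs1.
have [Nv2 [Nvp2 [Y20 [Yp20 [X20 [Smu2 Sd2]]]]]] :=
  comp_step L h0 M2p dt0 K0 HA2 Pm2 Pn2 Pp2 Pmu2 m2a m2b Hs2.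
rewrite /Eh Nv1 Nvp1 Nv2 Nvp2 !norm2E /Gh !innerE.
have one1 : forall f : grid R, SS n.+1 (fun i j => f i j * Defs.one R i j) = SS n.+1 (fun i j => f i j * 1).
  by move=> f; apply: SS_ext.
rewrite !one1.
have F1 : forall ph : pair R, SS n.+1 (fun i j => (Sfun p (ph.1 i j) (ph.2 i j) + Hfun p (ph.1 i j) (ph.2 i j)) * 1)
   = SS n.+1 (fun i j => Sfun p (ph.1 i j) (ph.2 i j)) + SS n.+1 (fun i j => Hfun p (ph.1 i j) (ph.2 i j)).
  by move=> ph; rewrite -SSD; apply: SS_ext => i j; rewrite mulr1.
rewrite !F1.
have Pos3 : forall ph : pair R, (forall i j, 0 < ph.1 i j /\ 0 < ph.2 i j /\ ph.1 i j + ph.2 i j < 1) ->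
    forall i j, 0 < u3 ph i j.
  by move=> ph H i j; rewrite /u3; case: (H i j) => _ [_ ?]; lra.
have Pos1 : forall ph : pair R, (forall i j, 0 < ph.1 i j /\ 0 < ph.2 i j /\ ph.1 i j + ph.2 i j < 1) ->
    forall i j, 0 < u1 ph i j.
  by move=> ph H i j; case: (H i j).
have Pos2 : forall ph : pair R, (forall i j, 0 < ph.1 i j /\ 0 < ph.2 i j /\ ph.1 i j + ph.2 i j < 1) ->
    forall i j, 0 < u2 ph i j.
  by move=> ph H i j; case: (H i j) => _ [].
have F2a : SS n.+1 (fun i j => grad_term h (u1 pp) i j * 1) - SS n.+1 (fun i j => grad_term h (u1 pn) i j * 1)
    <= SS n.+1 (fun i j => Tk h (u1 pp) i j * (u1 pp i j - u1 pn i j)) := grad_conv h Pn1 Pp1 (Pos1 _ Hn) (Pos1 _ Hp).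
have F2b : SS n.+1 (fun i j => grad_term h (u2 pp) i j * 1) - SS n.+1 (fun i j => grad_term h (u2 pn) i j * 1)
    <= SS n.+1 (fun i j => Tk h (u2 pp) i j * (u2 pp i j - u2 pn i j)) := grad_conv h Pn2 Pp2 (Pos2 _ Hn) (Pos2 _ Hp).
have F2c := grad_conv h (Pu3 _ Pn1 Pn2) (Pu3 _ Pp1 Pp2) (Pos3 _ Hn) (Pos3 _ Hp).
have F3 : SS n.+1 (fun i j => Sfun p (pp.1 i j) (pp.2 i j)) - SS n.+1 (fun i j => Sfun p (pn.1 i j) (pn.2 i j))
   <= SS n.+1 (fun i j => dSa p (pp.1 i j) (pp.2 i j) * (pp.1 i j - pn.1 i j) + dSb p (pp.1 i j) (pp.2 i j) * (pp.2 i j - pn.2 i j)).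
  rewrite -SSB; apply: SS_le => i j.
  case: (Hn i j) => a0 [b0 ab0]; case: (Hp i j) => a1 [b1 ab1].
  exact: S_conv.
have F4 : SS n.+1 (fun i j => dG1 h p pp i j * (pp.1 i j - pn.1 i j)) +
          SS n.+1 (fun i j => dG2 h p pp i j * (pp.2 i j - pn.2 i j)) =
   SS n.+1 (fun i j => dSa p (pp.1 i j) (pp.2 i j) * (pp.1 i j - pn.1 i j) + dSb p (pp.1 i j) (pp.2 i j) * (pp.2 i j - pn.2 i j))
   + eps1 p ^+ 2 * SS n.+1 (fun i j => Tk h (u1 pp) i j * (u1 pp i j - u1 pn i j))
   + eps2 p ^+ 2 * SS n.+1 (fun i j => Tk h (u2 pp) i j * (u2 pp i j - u2 pn i j))
   + eps3 p ^+ 2 * SS n.+1 (fun i j => Tk h (u3 pp) i j * (u3 pp i j - u3 pn i j)).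
  rewrite -!SSZ -!SSD; apply: SS_ext => i j.
  rewrite /dG1 /dG2 /u3 /u1 /u2; ring.
have F5a : SS n.+1 (fun i j => mu1 i j * (pp.1 i j - pn.1 i j)) =
   SS n.+1 (fun i j => dG1 h p pp i j * (pp.1 i j - pn.1 i j)) +
   SS n.+1 (fun i j => dHa p (hat1 i j) (hat2 i j) * (pp.1 i j - pn.1 i j)) +
   A1 * dt * Gr n.+1 h (fun i j => pp.1 i j - pn.1 i j) (fun i j => pp.1 i j - pn.1 i j).
  have Pd : per n.+1 (fun i j => pp.1 i j - pn.1 i j) by apply: per_sub.
  rewrite (@SS_ext _ n.+1 _ (fun i j => dG1 h p pp i j * (pp.1 i j - pn.1 i j) +
     dHa p (hat1 i j) (hat2 i j) * (pp.1 i j - pn.1 i j) +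
     (- (A1 * dt)) * (lap h (fun i j => pp.1 i j - pn.1 i j) i j * (pp.1 i j - pn.1 i j)))); last first.
    by move=> i j; rewrite /mu1; ring.
  rewrite !SSD SSZ (sbp_lap h Pd Pd); ring.
have F5b : SS n.+1 (fun i j => mu2 i j * (pp.2 i j - pn.2 i j)) =
   SS n.+1 (fun i j => dG2 h p pp i j * (pp.2 i j - pn.2 i j)) +
   SS n.+1 (fun i j => dHb p (hat1 i j) (hat2 i j) * (pp.2 i j - pn.2 i j)) +
   A2 * dt * Gr n.+1 h (fun i j => pp.2 i j - pn.2 i j) (fun i j => pp.2 i j - pn.2 i j).
  have Pd : per n.+1 (fun i j => pp.2 i j - pn.2 i j) by apply: per_sub.
  rewrite (@SS_ext _ n.+1 _ (fun i j => dG2 h p pp i j * (pp.2 i j - pn.2 i j) +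
     dHb p (hat1 i j) (hat2 i j) * (pp.2 i j - pn.2 i j) +
     (- (A2 * dt)) * (lap h (fun i j => pp.2 i j - pn.2 i j) i j * (pp.2 i j - pn.2 i j)))); last first.
    by move=> i j; rewrite /mu2; ring.
  rewrite !SSD SSZ (sbp_lap h Pd Pd); ring.
set C1 := (2 * chi12 p + 3 * chi13 p + chi23 p) / 2.
set C2 := (2 * chi12 p + chi13 p + 3 * chi23 p) / 2.
have F6 : SS n.+1 (fun i j => Hfun p (pp.1 i j) (pp.2 i j) - Hfun p (pn.1 i j) (pn.2 i j)
      - (dHa p (hat1 i j) (hat2 i j) * (pp.1 i j - pn.1 i j) + dHb p (hat1 i j) (hat2 i j) * (pp.2 i j - pn.2 i j))
      + C1 * ((pp.1 i j - pn.1 i j) * (pp.1 i j - pn.1 i j) - (pn.1 i j - pm.1 i j) * (pn.1 i j - pm.1 i j))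
      + C2 * ((pp.2 i j - pn.2 i j) * (pp.2 i j - pn.2 i j) - (pn.2 i j - pm.2 i j) * (pn.2 i j - pm.2 i j)))
    <= SS n.+1 (fun i j => K * ((pp.1 i j - pn.1 i j) * (pp.1 i j - pn.1 i j) + (pp.2 i j - pn.2 i j) * (pp.2 i j - pn.2 i j))).
  apply: SS_le => i j.
  have := H_ineq (pn.1 i j) (pn.2 i j) (pm.1 i j) (pm.2 i j) (pp.1 i j) (pp.2 i j) c12 c13 c23.
  by rewrite /C1 /C2 /K !expr2.
move: F5a F5b F6; move: (Hfun p) (dHa p) (dHb p) => Hf dA dB F5a F5b F6.
rewrite !(SSB, SSD, SSZ) in F6.
rewrite !SSN !SSD in F6.
have sc : forall c x y : R, 0 < c -> x <= y -> c * x <= c * y.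
  by move=> c x y c0 H; rewrite ler_pM2l.
have F2a' := sc _ _ _ (exprn_gt0 2 e1p) F2a.
have F2b' := sc _ _ _ (exprn_gt0 2 e2p) F2b.
have F2c' := sc _ _ _ (exprn_gt0 2 e3p) F2c.
have E41 : dt / (4 * Mob1) = dt / Mob1 / 4 by field; exact: lt0r_neq0.
have E42 : dt / (4 * Mob2) = dt / Mob2 / 4 by field; exact: lt0r_neq0.
rewrite E41 E42.
set q1 := dt / Mob1 in Smu1 Sd1 *; set q2 := dt / Mob2 in Smu2 Sd2 *.
rewrite !(mulrCA _ (h ^+ 2)) -!mulrDr ler_pM2l ?exprn_gt0 //.
lra.
Qed.
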